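(* Let $g:\mathbb{R}^n\to\mathbb{R}\cup\{+\infty\}$ be a proper closed convex function and let $f=f_1-f_2$, where $f_1,f_2:\mathbb{R}^n\to\mathbb{R}$ are convex differentiable functions such that $\nabla f_1$ is Lipschitz continuous with modulus $L>0$, $\nabla f_2$ is Lipschitz continuous with modulus $l\ge 0$, and $L\ge l$. Let $F=f+g$, and assume $\inf F>-\infty$ and that this infimum is attained. Let $\{x^k\}$ be generated by Algorithm 1 (described in the context), let $\bar\beta=\sup_k\beta_k$, and let $\alpha\in\big[\tfrac{L+l}{2}\bar\beta^2,\tfrac L2\big]$. Then: (i) the sequence $\{H_{k,\alpha}\}$ is convergent; (ii) $\sum_{k=0}^\infty\big(\alpha-\tfrac{L+l}{2}\beta_{k+1}^2\big)\|x^{k+1}-x^k\|^2<\infty$.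
   Context: For a proper closed convex $h$, $\mathrm{Prox}_h(v)=\arg\min_{x\in\mathbb{R}^n}\{h(x)+\tfrac12\|x-v\|^2\}$. Algorithm 1 (proximal gradient algorithm with extrapolation): choose $x^0\in\operatorname{dom} g$ and $\{\beta_k\}\subseteq[0,\sqrt{L/(L+l)}]$, set $x^{-1}=x^0$, and for $k=0,1,2,\dots$ set $y^k=x^k+\beta_k(x^k-x^{k-1})$ and $x^{k+1}=\mathrm{Prox}_{\frac1L g}\big(y^k-\tfrac1L\nabla f(y^k)\big)$. For $\alpha\ge0$, $H_{k,\alpha}:=F(x^k)+\alpha\|x^k-x^{k-1}\|^2$. *)

(* Defs.v *)
From HB Require Import structures.
From mathcomp Require Import all_boot all_order all_algebra.
From mathcomp Require Import all_classical all_reals all_analysis.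
Set Implicit Arguments. Unset Strict Implicit. Unset Printing Implicit Defensive.
Import Order.TTheory GRing.Theory Num.Theory.
Import numFieldNormedType.Exports.
Local Open Scope classical_set_scope.
Local Open Scope ring_scope.

Section Defs.
Variables (R : realType) (n : nat).
Notation vec := 'rV[R]_n.

Definition dotv (u v : vec) : R := \sum_(i < n) u ord0 i * v ord0 i.
Definition enorm (u : vec) : R := Num.sqrt (dotv u u).

Definition convex_fun (f : vec -> R) : Prop :=
  forall (x y : vec) (t : R), 0 <= t <= 1 ->
    f (t *: x + (1 - t) *: y) <= t * f x + (1 - t) * f y.

Definition convex_efun (g : vec -> \bar R) : Prop :=
  forall (x y : vec) (t : R), 0 <= t <= 1 ->
    (g (t *: x + (1 - t) *: y)%R <= t%:E * g x + (1 - t)%:E * g y)%E.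

Definition proper_efun (g : vec -> \bar R) : Prop :=
  (forall x, g x != -oo%E) /\ (exists x, (g x < +oo)%E).

Definition closed_efun (g : vec -> \bar R) : Prop :=
  closed [set p : vec * R | (g p.1 <= p.2%:E)%E].

Definition is_gradient (f : vec -> R) (G : vec -> vec) : Prop :=
  forall x, differentiable f x /\ forall v, 'd f x v = dotv (G x) v.

Definition lipschitz_mod (G : vec -> vec) (K : R) : Prop :=
  forall x y, enorm (G x - G y) <= K * enorm (x - y).

(* x' = Prox_{h}(v) where h = (1/L) g : x' minimizes (1/L) g(z) + 1/2 ||z - v||^2
   (the minimizer is unique for proper closed convex g) *)
Definition is_prox_scaled (L : R) (g : vec -> \bar R) (v x' : vec) : Prop :=
  forall z : vec,
    (L^-1%:E * g x' + (2^-1 * enorm (x' - v) ^+ 2)%:E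
     <= L^-1%:E * g z + (2^-1 * enorm (z - v) ^+ 2)%:E)%E.

(* Algorithm 1, with x^{-1} = x^0 encoded as x (0.-1) = x 0 *)
Definition extrap (beta : nat -> R) (x : nat -> vec) (k : nat) : vec :=
  x k + beta k *: (x k - x k.-1).

Definition algorithm1 (g : vec -> \bar R) (gradf : vec -> vec) (L l : R)
    (beta : nat -> R) (x : nat -> vec) : Prop :=
  (g (x 0%N) < +oo)%E /\
  (forall k, 0 <= beta k <= Num.sqrt (L / (L + l)))%R /\
  (forall k, is_prox_scaled L g
      (extrap beta x k - L^-1 *: gradf (extrap beta x k)) (x k.+1)).

Definition Hseq (F : vec -> \bar R) (alpha : R) (x : nat -> vec) (k : nat) : \bar R :=
  (F (x k) + (alpha * enorm (x k - x k.-1) ^+ 2)%:E)%E.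

End Defs.

(* Main.v *)
Require Import Defs.
From HB Require Import structures.
From mathcomp Require Import all_boot all_order all_algebra.
From mathcomp Require Import all_classical all_reals all_analysis.
From mathcomp Require Import ring lra.
Import Order.TTheory GRing.Theory Num.Theory.
Import numFieldNormedType.Exports.
Local Open Scope classical_set_scope.
Local Open Scope ring_scope.

Section S.
Variables (R : realType) (n : nat).
Notation vec := 'rV[R]_n.
Implicit Types u v w : vec.

Lemma dotvC u v : dotv u v = dotv v u.
Proof. by apply: eq_bigr => i _; rewrite mulrC. Qed.
Lemma dotvDl u v w : dotv (u + v) w = dotv u w + dotv v w.
Proof. by rewrite /dotv -big_split; apply: eq_bigr => i _; rewrite !mxE mulrDl. Qed.
Lemma dotvZl (a : R) u v : dotv (a *: u) v = a * dotv u v.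
Proof. by rewrite /dotv mulr_sumr; apply: eq_bigr => i _; rewrite !mxE mulrA. Qed.
Lemma dotvNl u v : dotv (- u) v = - dotv u v.
Proof. by rewrite -scaleN1r dotvZl mulN1r. Qed.
Lemma dotvBl u v w : dotv (u - v) w = dotv u w - dotv v w.
Proof. by rewrite dotvDl dotvNl. Qed.
Lemma dotvDr u v w : dotv w (u + v) = dotv w u + dotv w v.
Proof. by rewrite dotvC dotvDl !(dotvC w). Qed.
Lemma dotvZr (a : R) u v : dotv v (a *: u) = a * dotv v u.
Proof. by rewrite dotvC dotvZl dotvC. Qed.
Lemma dotvBr u v w : dotv w (u - v) = dotv w u - dotv w v.
Proof. by rewrite dotvC dotvBl !(dotvC w). Qed.
Lemma dotvNr u v : dotv v (- u) = - dotv v u.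
Proof. by rewrite dotvC dotvNl dotvC. Qed.
Lemma dotv_ge0 u : 0 <= dotv u u.
Proof. by apply: sumr_ge0 => i _; rewrite -expr2 sqr_ge0. Qed.
Lemma enorm_sq u : enorm u ^+ 2 = dotv u u.
Proof. by rewrite /enorm sqr_sqrtr // dotv_ge0. Qed.
Lemma enorm_ge0 u : 0 <= enorm u.
Proof. exact: sqrtr_ge0. Qed.
Lemma dotv0 u : dotv u u = 0 -> forall v, dotv u v = 0.
Proof.
move=> h v; have h2 : forall i, u ord0 i = 0.
  move=> i; have := h; rewrite /dotv => /eqP; rewrite psumr_eq0; last first.
    by move=> j _; rewrite -expr2 sqr_ge0.
  by move/allP/(_ i (mem_index_enum _)) => /=; rewrite mulf_eq0 orbb => /eqP.
by apply: big1 => i _; rewrite h2 mul0r.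
Qed.
Lemma dotv_amgm (s : R) u v : 0 < s ->
  2 * dotv u v <= s * dotv u u + s^-1 * dotv v v.
Proof.
move=> s0; rewrite /dotv !mulr_sumr -big_split /=; apply: ler_sum => i _.
set a := u ord0 i; set b := v ord0 i.
have : 0 <= s^-1 * (s * a - b) ^+ 2 by apply: mulr_ge0; [rewrite invr_ge0; exact: ltW | exact: sqr_ge0].
have e : s^-1 * (s * a - b) ^+ 2 = s * (a * a) + s^-1 * (b * b) - 2 * (a * b).
  by field; rewrite gt_eqF.
by rewrite e subr_ge0.
Qed.
Lemma CS u v : dotv u v <= enorm u * enorm v.
Proof.
have [u0|u0] := eqVneq (dotv u u) 0.
  by rewrite dotv0 // mulr_ge0 // enorm_ge0.
have [v0|v0] := eqVneq (dotv v v) 0.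
  by rewrite dotvC dotv0 // mulr_ge0 // enorm_ge0.
have nu : 0 < enorm u by rewrite sqrtr_gt0 lt_def u0 dotv_ge0.
have nv : 0 < enorm v by rewrite sqrtr_gt0 lt_def v0 dotv_ge0.
have := @dotv_amgm _ u v (divr_gt0 nv nu).
rewrite -!enorm_sq => h.
have e : enorm v / enorm u * enorm u ^+ 2 + (enorm v / enorm u)^-1 * enorm v ^+ 2
   = 2 * (enorm u * enorm v).
  by field; rewrite !gt_eqF.
rewrite e in h; lra.
Qed.
Lemma phi_quot (f : vec -> R) (y d : vec) (t : R) :
  (fun h : R => h^-1 *: (((fun s : R => f (y + s *: d)) \o shift t) (h *: 1) - f (y + t *: d)))
  = (fun h : R => h^-1 *: ((f \o shift (y + t *: d)) (h *: d) - f (y + t *: d))).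
Proof.
apply: funext => h /=; congr (_ *: (f _ - _)).
by rewrite /shift /= scalerDl [h *: 1]mulr1 addrCA addrA.
Qed.

Lemma phi_derive (f : vec -> R) G (y d : vec) (t : R) : is_gradient f G ->
  is_derive t 1 (fun s : R => f (y + s *: d)) (dotv (G (y + t *: d)) d).
Proof.
move=> hG; have [df dv] := hG (y + t *: d).
apply: DeriveDef.
  rewrite /derivable phi_quot; exact: diff_derivable.
rewrite /derive phi_quot -dv -deriveE //.
Qed.
Lemma enormZ (a : R) u : enorm (a *: u) = `|a| * enorm u.
Proof.
by rewrite /enorm dotvZl dotvZr mulrA -expr2 sqrtrM ?sqr_ge0 // sqrtr_sqr.
Qed.

Lemma descent (f : vec -> R) G (K : R) (y x : vec) :
  is_gradient f G -> lipschitz_mod G K -> 0 <= K ->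
  f x <= f y + dotv (G y) (x - y) + K / 2 * enorm (x - y) ^+ 2.
Proof.
move=> hG hL K0; set d := x - y; rewrite enorm_sq.
set c := dotv (G y) d; set q := dotv d d.
pose phi := fun s : R => f (y + s *: d).
pose h : R -> R := phi - c \*: (@id R) - (K / 2 * q) \*: ((@id R) ^+ 2).
have HD (t : R) : is_derive t 1 h (dotv (G (y + t *: d)) d - c *: 1
    - (K / 2 * q) *: ((2%:R * (@id R) t ^+ 2.-1) *: 1)).
  apply: is_deriveB; apply: is_deriveB; exact: phi_derive.
have hder (t : R) : derivable h t 1 by have [] := HD t.
have hcont : {within `[0, 1], continuous h}.
  apply: continuous_subspaceT => t.
  exact/differentiable_continuous/derivable1_diffP.
have key : h 1 <= h 0.
  apply: (@ler0_derive1_le_cc R h 0 1) => //.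
  - move=> t t01; rewrite derive1E (@derive_val _ _ _ _ _ _ _ (HD t)) /=.
    have t0 : 0 <= t by move: t01; rewrite in_itv /= => /andP[/ltW].
    have sm : forall a b : R, a *: b = a * b by []. rewrite !sm !mulr1 expr1.
    have := CS (G (y + t *: d) - G y) d; rewrite dotvBl -/c => hcs.
    have := hL (y + t *: d) y; rewrite addrAC subrr add0r enormZ ger0_norm // => hl.
    have hq : enorm d ^+ 2 = q by rewrite enorm_sq.
    have nd := enorm_ge0 d.
    have : enorm (G (y + t *: d) - G y) * enorm d <= K * (t * enorm d) * enorm d.
      by apply: ler_wpM2r.
    rewrite -hq; nra.
  - by rewrite in_itv /= lexx ler01.
  - by rewrite in_itv /= lexx ler01.
move: key; change (f (y + 1 *: d) - c * 1 - K / 2 * q * (1 ^+ 2) <= f (y + 0 *: d) - c * 0 - K / 2 * q * (0 ^+ 2) -> f x <= f y + c + K / 2 * q).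
rewrite scale0r scale1r addr0 /d subrKC expr0n expr1n /=; lra.
Qed.
Lemma convex_grad (f : vec -> R) G (y x : vec) :
  is_gradient f G -> convex_fun f -> f y + dotv (G y) (x - y) <= f x.
Proof.
move=> hG hc; set d := x - y.
have [df dv] := hG y.
have hr : (fun h : R => h^-1 *: ((f \o shift y) (h *: d) - f y)) @ 0^'+ --> 'D_d f y.
  apply: (cvg_trans _ (diff_derivable (v:=d) df)); apply: cvg_fmap2.
  by apply: within_subset => u /= u0; rewrite gt_eqF.
rewrite deriveE // dv in hr.
suff : dotv (G y) d <= f x - f y by lra.
apply: (cvgr_to_le hr); near=> h.
have h0 : 0 < h by near: h; exact: nbhs_right_gt.
have h1 : h <= 1 by near: h; apply: nbhs_right_le; exact: ltr01.
have := hc x y h; rewrite (ltW h0) h1 => /(_ isT).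
have -> : h *: x + (1 - h) *: y = h *: d + y.
  by rewrite /d scalerBr scalerBl scale1r [y - _]addrC addrA.
move=> H; rewrite /= /shift /=.
have sm : forall a b : R, a *: b = a * b by [].
rewrite sm addrC ler_pdivrMl //; lra.
Unshelve. all: by end_near.
Qed.
Lemma eps_lemma (A N : R) : 0 <= N ->
  (forall t, 0 < t -> t <= 1 -> A <= t * N) -> A <= 0.
Proof.
move=> N0 H; case: (lerP A 0) => // A0.
have AN : 0 < A + N by lra.
have := H (A / (A + N)) (divr_gt0 A0 AN).
rewrite ler_pdivrMr // mul1r => /(_ ltac:(lra)).
rewrite mulrAC ler_pdivlMr // => h; nra.
Qed.

Lemma prox_fin (L : R) g (v x' z : vec) (gz : R) : 0 < L -> proper_efun g ->
  is_prox_scaled L g v x' -> g z = gz%:E -> exists gx, g x' = gx%:E.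
Proof.
move=> L0 [gNy _] H gzE; have := H z; rewrite gzE.
case E: (g x') => [r| |]; first by exists r.
  by rewrite gt0_muley ?lte_fin ?invr_gt0 // addye.
by have := gNy x'; rewrite E.
Qed.

Lemma normsq_comb (t : R) (a b : vec) :
  dotv (t *: a + (1 - t) *: b) (t *: a + (1 - t) *: b)
  = t * dotv a a + (1 - t) * dotv b b - t * (1 - t) * dotv (a - b) (a - b).
Proof.
rewrite !dotvDl !dotvDr !dotvZl !dotvZr !dotvNl !dotvNr (dotvC b a).
set p := dotv a a; set q := dotv b b; set r := dotv a b; ring.
Qed.

Lemma prox_strong (L : R) g (v x' z : vec) (gx gz : R) : 0 < L -> proper_efun g ->
  convex_efun g -> is_prox_scaled L g v x' -> g z = gz%:E -> g x' = gx%:E ->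
  L^-1 * gx + 2^-1 * dotv (x' - v) (x' - v) + 2^-1 * dotv (z - x') (z - x')
  <= L^-1 * gz + 2^-1 * dotv (z - v) (z - v).
Proof.
move=> L0 [gNy _] gc H gzE gxE.
set N := dotv (z - x') (z - x').
suff : L^-1 * gx + 2^-1 * dotv (x' - v) (x' - v) -
   (L^-1 * gz + 2^-1 * dotv (z - v) (z - v)) + 2^-1 * N <= 0 by lra.
apply: (@eps_lemma _ (2^-1 * N)); first by rewrite mulr_ge0 ?invr_ge0 ?ler0n ?dotv_ge0.
move=> t t0 t1.
set zt := t *: z + (1 - t) *: x'.
have hg := gc z x' t; rewrite (ltW t0) t1 gzE gxE /= in hg; have {}hg := hg isT.
have := H zt; rewrite gxE.
case E: (g zt) hg => [r| |] //=; last by have := gNy zt; rewrite E.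
rewrite !lee_fin => hr hp.
have e : zt - v = t *: (z - v) + (1 - t) *: (x' - v).
  by apply/rowP => i; rewrite /zt !mxE; ring.
have e2 : (z - v) - (x' - v) = z - x' by rewrite opprB addrA subrK.
rewrite !enorm_sq e normsq_comb e2 -/N in hp.
set p := dotv (z - v) (z - v) in hp *; set q := dotv (x' - v) (x' - v) in hp *.
have Li : 0 < L^-1 by rewrite invr_gt0.
have hr' : L^-1 * r <= L^-1 * (t * gz + (1 - t) * gx) by rewrite ler_pM2l.
have N0 : 0 <= N by apply: dotv_ge0.
have : t * (L^-1 * gx + 2^-1 * q - (L^-1 * gz + 2^-1 * p) + 2^-1 * N) <= t * (t * (2^-1 * N)).
  nra.
by rewrite ler_pM2l.
Qed.
Lemma normsq_add (c : R) (a w : vec) :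
  dotv (a + c *: w) (a + c *: w) = dotv a a + 2 * c * dotv w a + c ^+ 2 * dotv w w.
Proof.
rewrite !dotvDl !dotvDr !dotvZl !dotvZr (dotvC a w).
set p := dotv a a; set q := dotv w w; set r := dotv w a; ring.
Qed.

Lemma step_ineq (f1 f2 : vec -> R) (G1 G2 : vec -> vec) g (L l b : R) (xm xk x' : vec)
   (gk gx : R) :
  0 < L -> 0 <= l -> proper_efun g -> convex_efun g ->
  convex_fun f1 -> convex_fun f2 -> is_gradient f1 G1 -> is_gradient f2 G2 ->
  lipschitz_mod G1 L -> lipschitz_mod G2 l ->
  let y := xk + b *: (xk - xm) in
  is_prox_scaled L g (y - L^-1 *: (G1 y - G2 y)) x' ->
  g xk = gk%:E -> g x' = gx%:E ->
  f1 x' - f2 x' + gx <= f1 xk - f2 xk + gk + (L + l) / 2 * b ^+ 2 * dotv (xk - xm) (xk - xm)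
     - L / 2 * dotv (x' - xk) (x' - xk).
Proof.
move=> L0 l0 gp gc c1 c2 h1 h2 L1 L2 y P gkE gxE.
set w := L^-1 *: (G1 y - G2 y).
have eG : G1 y - G2 y = L *: w by rewrite /w scalerA mulfV ?gt_eqF // scale1r.
have {}P : is_prox_scaled L g (y - w) x' by [].
clearbody w.
have P' := @prox_strong L g _ x' xk gx gk L0 gp gc P gkE gxE.
have ex : x' - (y - w) = (x' - y) + 1 *: w by apply/rowP => i; rewrite !mxE; ring.
have ez : xk - (y - w) = (xk - y) + 1 *: w by apply/rowP => i; rewrite !mxE; ring.
rewrite ex ez !normsq_add in P'.
have ezy : xk - y = (- b) *: (xk - xm) by apply/rowP => i; rewrite /y !mxE; ring.
rewrite ezy !dotvZl !dotvZr in P'.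
have up1 := @descent f1 G1 L y x' h1 L1 (ltW L0).
have up2 := @convex_grad f2 G2 y x' h2 c2.
have lo1 := @convex_grad f1 G1 y xk h1 c1.
have lo2 := @descent f2 G2 l y xk h2 L2 l0.
rewrite !enorm_sq in up1 lo2.
rewrite ezy !dotvZl !dotvZr in lo2.
rewrite ezy !dotvZr in lo1.
have e1 : dotv (G1 y) (x' - y) - dotv (G2 y) (x' - y) = L * dotv w (x' - y).
  by rewrite -dotvBl eG dotvZl.
have e2 : dotv (G1 y) (xk - xm) - dotv (G2 y) (xk - xm) = L * dotv w (xk - xm).
  by rewrite -dotvBl eG dotvZl.
set A := L^-1 * gx in P'; set B := L^-1 * gk in P'.
have eA : gx = L * A by rewrite /A mulrA mulfV ?gt_eqF // mul1r.
have eB : gk = L * B by rewrite /B mulrA mulfV ?gt_eqF // mul1r.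
rewrite eA eB.
set Nxy := dotv (x' - y) (x' - y) in P' up1 *.
set Nd := dotv (xk - xm) (xk - xm) in P' lo2 *.
set D := dotv (xk - x') (xk - x') in P'.
have eD : dotv (x' - xk) (x' - xk) = D.
  by rewrite /D -opprB dotvNl dotvNr opprK.
rewrite eD.
set cw := dotv w (x' - y) in P' e1.
set cz := dotv w (xk - xm) in P' e2.
set Nw := dotv w w in P'.
have Nd0 : 0 <= Nd by apply: dotv_ge0.
have P2 : L * (A + 2^-1 * (Nxy + 2 * 1 * cw + 1 ^+ 2 * Nw) + 2^-1 * D) <=
          L * (B + 2^-1 * (- b * (- b * Nd) + 2 * 1 * (- b * cz) + 1 ^+ 2 * Nw)) by
  rewrite ler_pM2l.
move: up1 up2 lo1 lo2 e1 e2 P2; set u1 := dotv (G1 y) _; set u2 := dotv (G2 y) _.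
set v1 := dotv (G1 y) (xk - xm); set v2 := dotv (G2 y) (xk - xm).
move=> up1 up2 lo1 lo2 e1 e2 P2.
nra.
Qed.
End S.

Theorem lemma3p3 (R : realType) (n : nat)
  (g : 'rV[R]_n -> \bar R) (f1 f2 : 'rV[R]_n -> R) (G1 G2 : 'rV[R]_n -> 'rV[R]_n)
  (L l : R) (beta : nat -> R) (x : nat -> 'rV[R]_n) (alpha : R) :
  proper_efun g -> closed_efun g -> convex_efun g ->
  convex_fun f1 -> convex_fun f2 ->
  is_gradient f1 G1 -> is_gradient f2 G2 ->
  0 < L -> 0 <= l -> l <= L ->
  lipschitz_mod G1 L -> lipschitz_mod G2 l ->
  let F := fun z => ((f1 z - f2 z)%:E + g z)%E in
  (-oo < ereal_inf (range F))%E ->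
  (exists xs, forall z, (F xs <= F z)%E) ->
  algorithm1 g (fun z => G1 z - G2 z) L l beta x ->
  let betabar := sup (range beta) in
  (L + l) / 2 * betabar ^+ 2 <= alpha -> alpha <= L / 2 ->
  (exists lim : R, Hseq F alpha x @ \oo --> lim%:E) /\
  (\sum_(0 <= k <oo)
      ((alpha - (L + l) / 2 * beta k.+1 ^+ 2) * enorm (x k.+1 - x k) ^+ 2)%:E
     < +oo)%E.
Proof.
move=> gp _ gc c1 c2 h1 h2 L0 l0 lL L1 L2 F _ [xs hxs] [gx0 [hb hprox]] betabar ha1 ha2.
have gfin : forall k, exists r, g (x k) = r%:E.
  elim=> [|k [r hr]].
    case E: (g (x 0%N)) gx0 => [r| |] //; first by exists r.
    by have := gp.1 (x 0%N); rewrite E.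
  exact: (@prox_fin R n L g _ _ _ r L0 gp (hprox k) hr).
pose gr k := fine (g (x k)).
have grE k : g (x k) = (gr k)%:E by have [r hr] := gfin k; rewrite /gr hr.
pose N k := enorm (x k - x k.-1) ^+ 2.
pose h k := f1 (x k) - f2 (x k) + gr k + alpha * N k.
have hE k : Hseq F alpha x k = (h k)%:E by rewrite /Hseq /F grE.
have Nge0 k : 0 <= N k by rewrite /N sqr_ge0.
have hub : has_ubound (range beta).
  by exists (Num.sqrt (L / (L + l))) => _ [k _ <-]; have /andP[] := hb k.
have bb k : beta k ^+ 2 <= betabar ^+ 2.
  have /andP[b0 _] := hb k.
  have bk : beta k <= betabar by apply: ub_le_sup => //; exists k.
  by rewrite lerXn2r // ?nnegrE // (le_trans b0).
have ck k : 0 <= alpha - (L + l) / 2 * beta k ^+ 2.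
  have : (L + l) / 2 * beta k ^+ 2 <= (L + l) / 2 * betabar ^+ 2.
    by rewrite ler_wpM2l // divr_ge0 // addr_ge0 // ltW.
  lra.
have step k : h k.+1 <= h k - (alpha - (L + l) / 2 * beta k ^+ 2) * N k
                        - (L / 2 - alpha) * N k.+1.
  have := @step_ineq R n f1 f2 G1 G2 g L l (beta k) (x k.-1) (x k) (x k.+1) (gr k) (gr k.+1)
    L0 l0 gp gc c1 c2 h1 h2 L1 L2 (hprox k) (grE k) (grE k.+1).
  rewrite /h /N !enorm_sq /=; lra.
have hdec k : h k.+1 <= h k.
  have := step k.
  have t1 := mulr_ge0 (ck k) (Nge0 k).
  have t2 : 0 <= (L / 2 - alpha) * N k.+1 by rewrite mulr_ge0 // subr_ge0.
  lra.
have [m hm] : exists m, F xs = m%:E.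
  have := hxs (x 0%N); rewrite /F grE.
  case E: (g xs) => [r| |] //=; first by move=> _; eexists.
  by have := gp.1 xs; rewrite E.
have hlb k : m <= h k.
  have := hxs (x k); rewrite hm /F grE /= lee_fin /h => H.
  have : 0 <= (L + l) / 2 * betabar ^+ 2.
    by rewrite mulr_ge0 ?sqr_ge0 // divr_ge0 // addr_ge0 // ltW.
  move=> hh; have a0 : 0 <= alpha by lra.
  have : 0 <= alpha * N k by rewrite mulr_ge0.
  lra.
split.
  have hcv : cvgn h.
    apply: nonincreasing_is_cvgn.
      by apply/nonincreasing_seqP => k; exact: hdec.
    by exists m => _ [k _ <-]; exact: hlb.
  exists (limn h).
  have -> : Hseq F alpha x = EFin \o h by apply: funext => k; rewrite hE.
  by apply: cvg_EFin; [exact: nearW | exact: hcv].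
have tele : forall K, \sum_(0 <= k < K) ((alpha - (L + l) / 2 * beta k.+1 ^+ 2)
      * enorm (x k.+1 - x k) ^+ 2) <= h 1%N - h K.+1.
  elim=> [|K IH]; first by rewrite big_geq // subrr.
  rewrite big_nat_recr //=.
  have := step K.+1; have := Nge0 K.+2; have : 0 <= L / 2 - alpha by lra.
  rewrite /N /=; move: (L / 2 - alpha) => b b0 n0; nra.
apply: (@le_lt_trans _ _ (h 1%N - m)%:E); last exact: ltry.
apply: lime_le.
  apply: is_cvg_nneseries => k _ _; rewrite lee_fin mulr_ge0 //.
  exact: sqr_ge0.
apply: nearW => K; rewrite sumEFin lee_fin.
apply: (le_trans (tele K)); have := hlb K.+1; lra.
Qed.
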